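(* Let $A$ be a set of vertices of the path $P_n$ with $2\le |A|\le n$. Then the output of $\textsc{Ascending Local Search}(P_n,W,A)$ is a maximizer of $W$ on $P_n$.
   Context: $P_n$ is the path on vertices $\{1,\dots,n\}$. $W(X)=\sum_{\{u,v\}\subseteq X,u\ne v}d(u,v)$ over unordered pairs, $d$ shortest-path distance; $X$ is a maximizer of $W$ if $W(X)=\max\{W(B):|B|=|X|\}$. A perturbation of $X$ in a graph $G$ is a set $(X\setminus\{u\})\cup\{v\}$ with $u\in X$, $v\in V(G)\setminus X$ and $uv\in E(G)$. $\textsc{Ascending Local Search}(G,F,A)$: set $X=A$; list all perturbations of $X$ in $G$ as $L(0),L(1),\dots$; if $F(L(i))>F(X)$ for some $i$, replace $X$ by $L(j)$ for the least such $j$ and repeat; otherwise (all perturbations satisfy $F(L(i))\le F(X)$) return $X$. *)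

(* Defs.v *)
From mathcomp Require Import all_boot.
Set Implicit Arguments. Unset Strict Implicit. Unset Printing Implicit Defensive.

(* The path P_n: vertex i : 'I_n stands for vertex i+1 of {1,...,n}.
   Edges join i and i+1. *)
Definition Padj (n : nat) (u v : 'I_n) : bool := (u.+1 == v :> nat) || (v.+1 == u :> nat).

Definition Pdist (n : nat) (u v : 'I_n) : nat := (u - v) + (v - u).

Definition W (n : nat) (X : {set 'I_n}) : nat :=
  \sum_(u in X) \sum_(v in X | (u < v)%N) Pdist u v.

Definition maximizer (n : nat) (X : {set 'I_n}) : Prop :=
  forall B : {set 'I_n}, #|B| = #|X| -> W B <= W X.

Definition perturbation (n : nat) (X Y : {set 'I_n}) : Prop :=
  exists u v : 'I_n, [/\ u \in X, v \notin X, Padj u v & Y = (X :\ u) :|: [set v]].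

Definition perturbation_listing (n : nat) (L : {set 'I_n} -> seq {set 'I_n}) : Prop :=
  forall X Y, Y \in L X <-> perturbation X Y.

(* One step of Ascending Local Search with objective F: replace X by the first
   L(j) in the listing with F(L(j)) > F(X); if none exists, X is kept. *)
Definition ALS_step (n : nat) (L : {set 'I_n} -> seq {set 'I_n})
  (F : {set 'I_n} -> nat) (X : {set 'I_n}) : {set 'I_n} :=
  nth X (L X) (find (fun Y => F X < F Y) (L X)).

Definition ALS_returns (n : nat) (L : {set 'I_n} -> seq {set 'I_n})
  (F : {set 'I_n} -> nat) (A X : {set 'I_n}) : Prop :=
  exists k, X = iter k (ALS_step L F) A /\ (forall Y, Y \in L X -> F Y <= F X).

(* Main.v *)
Require Import Defs.
From mathcomp Require Import all_boot zify.
Set Implicit Arguments. Unset Strict Implicit. Unset Printing Implicit Defensive.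

Lemma key2 (c e c' e' : nat) : c + e = c' + e' -> (c' < c -> c <= e+1) -> (c < c' -> e <= c+1) -> c'*e' <= c*e.
move=> h1 h2 h3. case: (ltngtP c' c) => h.
- have {}h2 := h2 h. have [d hd] : exists d, c = c' + d.+1 by exists (c - c'.+1); lia.
  have he : e' = e + d.+1 by lia. rewrite hd he mulnDr mulnDl leq_add2l mulnC leq_mul2l; lia.
- have {}h3 := h3 h. have [d hd] : exists d, c' = c + d.+1 by exists (c' - c.+1); lia.
  have he : e = e' + d.+1 by lia. rewrite hd he mulnDr mulnDl leq_add2l mulnC leq_mul2r; lia.
- subst; have -> : e' = e by lia. done.
Qed.

Lemma numL cY eY cX eX : cY + 0 = cX + 1 -> eY + 1 = eX + 0 -> cY * eY <= cX * eX -> eX <= cX + 1.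
Proof. move=> h1 h2; rewrite !addn0 in h1 h2; subst. rewrite mulnDl mulnDr mul1n muln1. lia. Qed.
Lemma numR cY eY cX eX : cY + 1 = cX + 0 -> eY + 0 = eX + 1 -> cY * eY <= cX * eX -> cX <= eX + 1.
Proof. move=> h1 h2; rewrite !addn0 in h1 h2; subst. rewrite mulnDl mulnDr mul1n muln1. lia. Qed.

Section S.
Variable m : nat.
Implicit Types X Y B : {set 'I_m.+1}.

Definition cnt X (j : nat) : nat := \sum_(x in X) nat_of_bool (x <= j).
Definition ecnt X (j : nat) : nat := \sum_(x in X) nat_of_bool (j <= x).

Lemma sum_between u v k : u <= v ->
  \sum_(j < k) nat_of_bool ((u <= j) && (j < v)) = minn v k - minn u k.
Proof.
move=> huv; elim: k => [|k IH]; first by rewrite big_ord0 !minn0.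
rewrite big_ord_recr /= IH.
case: (leqP u k) => h1; case: (ltnP k v) => h2 /=; lia.
Qed.

Lemma Wedge X : W X = \sum_(i < m) cnt X i * ecnt X i.+1.
Proof.
rewrite /W.
have E : forall u v : 'I_m.+1, u < v -> Pdist u v = \sum_(j < m) nat_of_bool ((u <= j) && (j < v)).
  move=> u v huv; rewrite sum_between; last exact: ltnW.
  have := ltn_ord v; have := ltn_ord u; rewrite /Pdist; lia.
under eq_bigr => u _ do (under eq_bigr => v /andP[_ huv] do rewrite (E u v huv)).
under eq_bigr => u _ do rewrite exchange_big.
rewrite exchange_big; apply: eq_bigr => j _.
rewrite /cnt big_distrl; apply: eq_bigr => u _.
rewrite /ecnt big_distrr big_mkcondr /=; apply: eq_bigr => v _.
case: ifP => huv; case: (leqP u j) => h1; case: (ltnP j v) => h2 /=; lia.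
Qed.

Lemma sum_swap X u v (g : 'I_m.+1 -> nat) : u \in X -> v \notin X ->
  \sum_(x in (X :\ u) :|: [set v]) g x + g u = \sum_(x in X) g x + g v.
Proof.
move=> hu hv; rewrite setUC big_setU1 /=; last by rewrite in_setD1 (negbTE hv) andbF.
rewrite (big_setD1 u hu) /=; lia.
Qed.

Lemma indic X i : i <= m -> \sum_(x in X) nat_of_bool (x == i :> nat) = (inord i \in X).
Proof.
move=> hi.
rewrite (eq_bigr (fun x => nat_of_bool (x == inord i))); last first.
  by move=> x _; rewrite -(inj_eq val_inj) /= inordK.
rewrite big_mkcond (bigD1 (inord i)) //= eqxx big1 ?addn0; first by case: (_ \in X).
by move=> x hx; rewrite (negbTE hx); case: (_ \in X).
Qed.

Lemma cntS X j : j < m -> cnt X j.+1 = cnt X j + (inord j.+1 \in X).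
Proof.
move=> hj; rewrite /cnt -indic // -big_split; apply: eq_bigr => x _ /=.
case: (leqP x j) => h; case: (@eqP nat (nat_of_ord x) j.+1) => h'; case: (leqP x j.+1) => h''; lia.
Qed.

Lemma cnt0 X : cnt X 0 = (inord 0 \in X).
Proof.
rewrite /cnt -indic //; apply: eq_bigr => x _ /=. by rewrite leqn0.
Qed.

Lemma ecntS X j : j <= m -> ecnt X j = ecnt X j.+1 + (inord j \in X).
Proof.
move=> hj; rewrite /ecnt -indic // -big_split; apply: eq_bigr => x _ /=.
case: (leqP j x) => h; case: (@eqP nat (nat_of_ord x) j) => h'; case: (leqP j.+1 x) => h''; lia.
Qed.

Lemma ecntN X : ecnt X m.+1 = 0.
Proof. by rewrite /ecnt big1 // => x _; rewrite leqNgt ltn_ord. Qed.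

Lemma cnt_ecnt X j : cnt X j + ecnt X j.+1 = #|X|.
Proof.
rewrite /cnt /ecnt -big_split -sum1_card; apply: eq_bigr => x _ /=.
case: (leqP x j) => h; lia.
Qed.

Lemma cnt_le X j : j <= m -> cnt X j <= j.+1.
Proof.
elim: j => [|j IH] hj; first by rewrite cnt0; case: (_ \in X).
rewrite cntS //; have := IH (ltnW hj); case: (_ \in X) => /=; lia.
Qed.

Lemma ecnt_le X j : j <= m.+1 -> ecnt X j <= m.+1 - j.
Proof.
move=> hj; have [d [hd hdm]] : exists d, j = m.+1 - d /\ d <= m.+1 by exists (m.+1 - j); lia.
rewrite hd; clear hd hj; elim: d hdm => [|d IH] hd; first by rewrite subn0 ecntN.
have e : m.+1 - d = (m.+1 - d.+1).+1 by lia.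
rewrite (ecntS _ (_ : m.+1 - d.+1 <= m)); last by lia.
have := IH (ltnW hd); rewrite e; case: (_ \in X) => /=; lia.
Qed.


Lemma cnt_swap X u v i : u \in X -> v \notin X ->
  cnt ((X :\ u) :|: [set v]) i + (u <= i) = cnt X i + (v <= i).
Proof. exact: sum_swap. Qed.
Lemma ecnt_swap X u v i : u \in X -> v \notin X ->
  ecnt ((X :\ u) :|: [set v]) i + (i <= u) = ecnt X i + (i <= v).
Proof. exact: sum_swap. Qed.

Lemma one_change (F G : 'I_m -> nat) j0 : \sum_i F i <= \sum_i G i ->
  (forall i, i != j0 -> F i = G i) -> F j0 <= G j0.
Proof.
move=> hs he; move: hs; rewrite (bigD1 j0) //= (bigD1 j0 (P := predT)) //=.
by rewrite (eq_bigr _ (fun i (h : i != j0) => he i h)) leq_add2r.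
Qed.

Section Loc.
Variable X : {set 'I_m.+1}.
Hypothesis Hloc : forall Y, perturbation X Y -> W Y <= W X.

Lemma HL j : j < m -> inord j.+1 \in X -> inord j \notin X -> ecnt X j.+1 <= cnt X j + 1.
Proof.
move=> hj hu hv.
have hp : perturbation X ((X :\ inord j.+1) :|: [set inord j]).
  exists (inord j.+1), (inord j); split => //.
  by rewrite /Padj !inordK ?eqxx ?orbT //; lia.
have := Hloc hp; rewrite !Wedge => /one_change H.
have {}H := H (Ordinal hj).
have c := cnt_swap j hu hv; have e := ecnt_swap j.+1 hu hv.
rewrite !inordK /= in c e; try lia.
suff : cnt (X :\ inord j.+1 :|: [set inord j]) j * ecnt (X :\ inord j.+1 :|: [set inord j]) j.+1 <=
       cnt X j * ecnt X j.+1 by rewrite leqnn ltnn ltnSn /= in c e; apply: numL c e.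
apply: H => i hi.
have hij : (i:nat) <> j by move=> h; move/eqP: hi; apply; apply: val_inj.
have c' := cnt_swap i hu hv; have e' := ecnt_swap i.+1 hu hv.
rewrite !inordK /= in c' e'; try lia.
have -> : cnt (X :\ inord j.+1 :|: [set inord j]) i = cnt X i.
  move: c'; case: (leqP j.+1 i) => ?; case: (leqP j i) => ? /=; first [lia | move/addIn; exact].
have -> : ecnt (X :\ inord j.+1 :|: [set inord j]) i.+1 = ecnt X i.+1; last by [].
move: e'; case: (leqP i.+1 j.+1) => ?; case: (leqP i.+1 j) => ? /=; first [lia | move/addIn; exact].
Qed.
Lemma HR j : j < m -> inord j \in X -> inord j.+1 \notin X -> cnt X j <= ecnt X j.+1 + 1.
Proof.
move=> hj hu hv.
have hp : perturbation X ((X :\ inord j) :|: [set inord j.+1]).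
  exists (inord j), (inord j.+1); split => //.
  by rewrite /Padj !inordK ?eqxx ?orbT //; lia.
have := Hloc hp; rewrite !Wedge => /one_change H.
have {}H := H (Ordinal hj).
have c := cnt_swap j hu hv; have e := ecnt_swap j.+1 hu hv.
rewrite !inordK /= in c e; try lia.
suff : cnt (X :\ inord j :|: [set inord j.+1]) j * ecnt (X :\ inord j :|: [set inord j.+1]) j.+1 <=
       cnt X j * ecnt X j.+1 by rewrite leqnn ltnn ltnSn /= in c e; apply: numR c e.
apply: H => i hi.
have hij : (i:nat) <> j by move=> h; move/eqP: hi; apply; apply: val_inj.
have c' := cnt_swap i hu hv; have e' := ecnt_swap i.+1 hu hv.
rewrite !inordK /= in c' e'; try lia.
have -> : cnt (X :\ inord j :|: [set inord j.+1]) i = cnt X i.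
  move: c'; case: (leqP j.+1 i) => ?; case: (leqP j i) => ? /=; first [lia | move/addIn; exact].
have -> : ecnt (X :\ inord j :|: [set inord j.+1]) i.+1 = ecnt X i.+1; last by [].
move: e'; case: (leqP i.+1 j.+1) => ?; case: (leqP i.+1 j) => ? /=; first [lia | move/addIn; exact].
Qed.

Lemma L1 j : j <= m -> inord j \notin X -> ecnt X j.+1 = 0 \/ ecnt X j.+1 <= cnt X j + 1.
Proof.
move=> hj; have [d hd] : exists d, j + d = m by exists (m - j); lia.
elim: d j hd {hj} => [|d IH] j hd hv.
  by left; rewrite addn0 in hd; subst; rewrite ecntN.
have hjm : j < m by lia.
have e1 := ecntS X (hjm : j.+1 <= m); have c1 := cntS X hjm.
case: (boolP (inord j.+1 \in X)) => hin.
  by right; apply: HL.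
rewrite (negbTE hin) /= in e1 c1.
have hd' : j.+1 + d = m by lia.
have := IH j.+1 hd' hin; lia.
Qed.

Lemma L2 j : j <= m -> cnt X j < j.+1 -> ecnt X j.+1 <= cnt X j + 1.
Proof.
elim: j => [|j IH] hj hc.
  case: (boolP (inord 0 \in X)) => hin.
    by move: hc; rewrite cnt0 hin.
  by case: (L1 hj hin) => ->.
have c1 := cntS X hj; have e1 := ecntS X hj.
case: (boolP (inord j.+1 \in X)) => hin.
  rewrite hin /= in c1 e1.
  have := IH (ltnW hj); lia.
by case: (L1 hj hin) => ->.
Qed.

Lemma R1 j : j <= m -> inord j \notin X -> cnt X j = 0 \/ cnt X j <= ecnt X j.+1 + 1.
Proof.
elim: j => [|j IH] hj hv.
  by left; rewrite cnt0 (negbTE hv).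
have c1 := cntS X hj; have e1 := ecntS X hj.
rewrite (negbTE hv) /= in c1 e1.
case: (boolP (inord j \in X)) => hin.
  have := HR hj hin hv; lia.
have := IH (ltnW hj) hin; lia.
Qed.

Lemma R2 j : j <= m -> ecnt X j.+1 < m - j -> cnt X j <= ecnt X j.+1 + 1.
Proof.
move=> hj; have [d hd] : exists d, j + d = m by exists (m - j); lia.
elim: d j hd {hj} => [|d IH] j hd he.
  by rewrite addn0 in hd; subst; rewrite subnn in he.
have hjm : j < m by lia.
have e1 := ecntS X (hjm : j.+1 <= m); have c1 := cntS X hjm.
case: (boolP (inord j.+1 \in X)) => hin.
  rewrite hin /= in e1 c1.
  have hd' : j.+1 + d = m by lia.
  have := IH j.+1 hd'; lia.
rewrite (negbTE hin) /= in e1 c1.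
have := R1 hjm hin; lia.
Qed.

Lemma edge B : #|B| = #|X| -> forall i : 'I_m, cnt B i * ecnt B i.+1 <= cnt X i * ecnt X i.+1.
Proof.
move=> hB i; have hi := ltn_ord i.
have h1 := cnt_ecnt X i; have h2 := cnt_ecnt B i.
have h3 := cnt_le B (ltnW hi); have h4 := cnt_le X (ltnW hi).
have h5 := ecnt_le B (ltnW (hi : i.+1 < m.+1)).
have h6 := ecnt_le X (ltnW (hi : i.+1 < m.+1)).
apply: key2; first lia.
  move=> hlt; case: (ltnP (ecnt X i.+1) (m - i)) => hh.
    exact: R2 (ltnW hi) hh.
  lia.
move=> hlt; apply: L2 (ltnW hi) _; lia.
Qed.
End Loc.
End S.

Theorem mainTheorem12 (n : nat) (A : {set 'I_n})
  (L : {set 'I_n} -> seq {set 'I_n}) :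
  perturbation_listing L -> 2 <= #|A| <= n ->
  forall X : {set 'I_n}, ALS_returns L (@W n) A X -> maximizer X.
Proof.
case: n A L => [|m] A L HL hA X [k [_ Hloc']] B HB.
  by move: hA => /andP[h1 h2]; move: (leq_trans h1 h2).
have Hloc : forall Y, perturbation X Y -> W Y <= W X.
  by move=> Y hp; apply: Hloc'; apply/(HL X Y).
rewrite !Wedge; apply: leq_sum => i _; exact: edge.
Qed.
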